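(* Let $M\in\mathbb{R}^{m\times m}$ be symmetric positive definite, let $\delta_1,\dots,\delta_{s+1}>0$, $\Delta=\mathrm{diag}(\delta_1,\dots,\delta_s)$ and $\Delta_{\mathrm{new}}=\mathrm{diag}(\delta_1,\dots,\delta_{s+1})$, and let $U\in\mathbb{R}^{m\times s}$. Suppose $U\Delta=V\Sigma W^*$ is the exact core SVD of $U\Delta:\mathbb{R}^s_\Delta\to\mathbb{R}^m_M$, where $V\in\mathbb{R}^{m\times k}$ with $V^TMV=I$, $W\in\mathbb{R}^{s\times k}$ with $W^T\Delta W=I$, $W^*=W^T\Delta$, and $\Sigma\in\mathbb{R}^{k\times k}$. Let $c\in\mathbb{R}^m$ and define $$h=c-VV^*c,\quad p=\|h\|_M,\quad Q=\begin{bmatrix}\Sigma&\delta_{s+1}^{1/2}V^*c\\0&\delta_{s+1}^{1/2}p\end{bmatrix}\in\mathbb{R}^{(k+1)\times(k+1)},$$ where $V^*=V^TM$. If $p>0$ and the standard core SVD of $Q$ is $Q=V_Q\Sigma_QW_Q^T$, then the core SVD of $[\,U\ c\,]\Delta_{\mathrm{new}}:\mathbb{R}^{s+1}_{\Delta_{\mathrm{new}}}\to\mathbb{R}^m_M$ is given by $$[\,U\ c\,]\Delta_{\mathrm{new}}=V_{\mathrm{new}}\Sigma_QW_{\mathrm{new}}^*,$$ where $V_{\mathrm{new}}=[\,V\ j\,]V_Q$ with $j=h/p$, $W_{\mathrm{new}}=W_uW_Q$ with $W_u=\begin{bmatrix}W&0\\0&\delta_{s+1}^{-1/2}\end{bmatrix}$,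 and $W_{\mathrm{new}}^*=W_{\mathrm{new}}^T\Delta_{\mathrm{new}}$.
   Context: For symmetric positive definite $M$, $\mathbb{R}^m_M$ is $\mathbb{R}^m$ with inner product $(x,y)_M=y^TMx$ and norm $\|x\|_M=(x^TMx)^{1/2}$; similarly for $\mathbb{R}^s_\Delta$. For a matrix $A:\mathbb{R}^s_\Delta\to\mathbb{R}^m_M$ the Hilbert adjoint is $A^*=\Delta^{-1}A^TM$. If $A$ has exactly $k$ positive singular values $\sigma_1\ge\cdots\ge\sigma_k>0$, a core SVD of $A$ is a factorization $A=V\Sigma W^*$ with $\Sigma=\mathrm{diag}(\sigma_1,\dots,\sigma_k)$, $V\in\mathbb{R}^{m\times k}$ whose columns are $M$-orthonormal eigenvectors of $AA^*$, $W\in\mathbb{R}^{s\times k}$ whose columns are $\Delta$-orthonormal eigenvectors of $A^*A$, satisfying $AW=V\Sigma$, $A^*V=W\Sigma$, and $W^*=W^T\Delta$. The standard core SVD is the case where both inner products are the standard unweighted ones. *)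

(* Defs.v *)
From HB Require Import structures.
From mathcomp Require Import all_boot all_order all_algebra.
Set Implicit Arguments. Unset Strict Implicit. Unset Printing Implicit Defensive.
Import Order.TTheory GRing.Theory Num.Theory.
Local Open Scope ring_scope.

Definition spd (R : realFieldType) (n : nat) (M : 'M[R]_n) : Prop :=
  M^T = M /\ forall x : 'cV[R]_n, x != 0 -> 0 < (x^T *m M *m x) 0 0.

(* Hilbert adjoint of A : R^s_D -> R^m_M, namely D^{-1} A^T M *)
Definition hadj (R : realFieldType) (m s : nat) (M : 'M[R]_m) (D : 'M[R]_s)
  (A : 'M[R]_(m, s)) : 'M[R]_(s, m) := invmx D *m A^T *m M.

(* Core SVD A = V Sigma W^* of A : R^s_D -> R^m_M, Sigma = diag sig,
   with sig listing exactly the positive singular values of A (with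
   multiplicity, nonincreasing): the eigenvalues of A^*A are the sig_i^2
   together with 0 of multiplicity s - k. *)
Definition is_core_svd (R : realFieldType) (m s k : nat) (M : 'M[R]_m)
  (D : 'M[R]_s) (A : 'M[R]_(m, s)) (V : 'M[R]_(m, k)) (sig : 'rV[R]_k)
  (W : 'M[R]_(s, k)) : Prop :=
  (forall i : 'I_k, 0 < sig 0 i) /\
      (forall i j : 'I_k, (i <= j)%N -> sig 0 j <= sig 0 i) /\
      char_poly (hadj M D A *m A) =
        'X^(s - k) * \prod_(i < k) ('X - ((sig 0 i) ^+ 2)%:P) /\
      V^T *m M *m V = 1%:M /\
        ((forall i : 'I_k, exists l : R,
            (A *m hadj M D A) *m col i V = l *: col i V)) /\
      W^T *m D *m W = 1%:M /\
        ((forall i : 'I_k, exists l : R,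
            (hadj M D A *m A) *m col i W = l *: col i W)) /\
      A *m W = V *m diag_mx sig /\
      hadj M D A *m V = W *m diag_mx sig /\
      A = V *m diag_mx sig *m (W^T *m D).

(* Main.v *)
Require Import Defs.
From HB Require Import structures.
From mathcomp Require Import all_boot all_order all_algebra.
From mathcomp Require Import ring zify.
Import Order.TTheory GRing.Theory Num.Theory.
Local Open Scope ring_scope.

Section G.
Variable R : realFieldType.

Lemma col_diag m q (B : 'M[R]_(m, q)) (sig : 'rV[R]_q) i :
  col i (B *m diag_mx sig) = sig 0 i *: col i B.
Proof. by rewrite mul_mx_diag; apply/matrixP => a b; rewrite !mxE mulrC. Qed.

Lemma hadj_svd m n q (M : 'M[R]_m) (D : 'M[R]_n) A V (sig : 'rV[R]_q) W :
  D^T = D -> D \in unitmx -> A = V *m diag_mx sig *m (W^T *m D) ->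
  hadj M D A = W *m diag_mx sig *m V^T *m M.
Proof.
move=> DT DU ->; rewrite /hadj !trmx_mul trmxK DT tr_diag_mx.
by rewrite !mulmxA mulVmx // mul1mx.
Qed.

Lemma svd_rest m n q (M : 'M[R]_m) (D : 'M[R]_n) A V (sig : 'rV[R]_q) W :
  D^T = D -> D \in unitmx -> A = V *m diag_mx sig *m (W^T *m D) ->
  V^T *m M *m V = 1%:M -> W^T *m D *m W = 1%:M ->
  [/\ (forall i : 'I_q, exists l : R,
            (A *m hadj M D A) *m col i V = l *: col i V),
      (forall i : 'I_q, exists l : R,
            (hadj M D A *m A) *m col i W = l *: col i W),
      A *m W = V *m diag_mx sig,
      hadj M D A *m V = W *m diag_mx sig &
      hadj M D A *m A = W *m diag_mx sig *m diag_mx sig *m (W^T *m D)].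
Proof.
move=> DT DU EA HV HW; have EH := @hadj_svd _ _ _ M _ _ _ _ _ DT DU EA.
have AW : A *m W = V *m diag_mx sig by rewrite EA -!mulmxA (mulmxA W^T) HW mulmx1.
have HVe : hadj M D A *m V = W *m diag_mx sig by rewrite EH -!mulmxA (mulmxA V^T) HV mulmx1.
have HA : hadj M D A *m A = W *m diag_mx sig *m diag_mx sig *m (W^T *m D).
  by rewrite {2}EA !mulmxA HVe.
split => //.
- move=> i; exists (sig 0 i * sig 0 i).
  by rewrite colE mulmxA -(mulmxA A) HVe mulmxA AW -!colE !col_diag scalerA.
- move=> i; exists (sig 0 i * sig 0 i).
  by rewrite colE mulmxA -(mulmxA _ A) AW mulmxA HVe -!colE !col_diag scalerA.
Qed.
End G.
Lemma sylv (R: comNzRingType) m n (A: 'M[R]_(m,n)) (B:'M[R]_(n,m)) :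
  'X^n * char_poly (A *m B) = 'X^m * char_poly (B *m A).
Proof.
set A' := map_mx polyC A; set B' := map_mx polyC B.
set Big := block_mx ('X%:M) A' ('X *: B') ('X%:M) : 'M[{poly R}]_(m+n).
set L := block_mx 1%:M 0 (-B') 1%:M : 'M[{poly R}]_(m+n).
have dL : \det L = 1 by rewrite /L det_lblock !det1 mulr1.
have e1 : L *m Big = block_mx 'X%:M A' 0 ('X%:M - B' *m A').
  rewrite /L /Big mulmx_block !mul1mx !mul0mx !addr0.
  by rewrite !mulNmx mul_mx_scalar addNr addrC.
have e2 : Big *m L = block_mx ('X%:M - A' *m B') A' 0 'X%:M.
  rewrite /L /Big mulmx_block !mulmx1 !mulmx0.
  by rewrite !add0r !mulmxN mul_scalar_mx subrr.
have := congr1 determinant e1; have := congr1 determinant e2.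
rewrite !det_mulmx dL mulr1 mul1r !det_ublock => E2 E1.
rewrite E1 in E2.
rewrite /char_poly /char_poly_mx !map_mxM -/A' -/B' -!det_scalar mulrC E2.
by rewrite mulrC.
Qed.

Lemma diag_unit (R : realFieldType) n (d : 'rV[R]_n) :
  (forall i, 0 < d 0 i) -> diag_mx d \in unitmx.
Proof.
move=> hd; rewrite unitmxE det_diag unitfE; apply: lt0r_neq0.
by apply: prodr_gt0 => i _; apply: hd.
Qed.

Theorem theorem4p1 (R : rcfType) (m s k kq : nat)
  (M : 'M[R]_m) (d : 'rV[R]_s) (e : R) (U : 'M[R]_(m, s))
  (V : 'M[R]_(m, k)) (sig : 'rV[R]_k) (W : 'M[R]_(s, k)) (c : 'cV[R]_m)
  (VQ : 'M[R]_(k + 1, kq)) (sigQ : 'rV[R]_kq) (WQ : 'M[R]_(k + 1, kq)) :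
  spd M ->
  (forall i : 'I_s, 0 < d 0 i) -> 0 < e ->
  is_core_svd M (diag_mx d) (U *m diag_mx d) V sig W ->
  let Vstar_c := V^T *m M *m c in
  let h := c - V *m Vstar_c in
  let p := Num.sqrt ((h^T *m M *m h) 0 0) in
  let Q : 'M[R]_(k + 1, k + 1) :=
    block_mx (diag_mx sig) (Num.sqrt e *: Vstar_c)
             0 (Num.sqrt e * p)%:M in
  0 < p ->
  is_core_svd 1%:M 1%:M Q VQ sigQ WQ ->
  let Dnew : 'M[R]_(s + 1) := diag_mx (row_mx d e%:M) in
  let j := p^-1 *: h in
  let Vnew := row_mx V j *m VQ in
  let Wu : 'M[R]_(s + 1, k + 1) :=
    block_mx W 0 0 (Num.sqrt e)^-1%:M in
  let Wnew := Wu *m WQ in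
  is_core_svd M Dnew (row_mx U c *m Dnew) Vnew sigQ Wnew.
Proof.
move=> [MT Mpos] hd he [_ [_ [_ [HV [_ [HW [_ [_ [_ EA]]]]]]]]].
move=> Vc h p Q hp [sQp [sQo [cpQ [HVQ [_ [HWQ [_ [_ [_ EQ]]]]]]]]].
move=> Dnew j Vnew Wu Wnew.
set se := Num.sqrt e.
have se0 : 0 < se by rewrite sqrtr_gt0.
have se2 : se ^+ 2 = e by rewrite sqr_sqrtr // ltW.
have sen : se != 0 by rewrite gt_eqF.
have pn : p != 0 by rewrite gt_eqF.
set D := diag_mx d.
have DT : D^T = D by rewrite tr_diag_mx.
have DU : D \in unitmx by apply: diag_unit.
have DnT : Dnew^T = Dnew by rewrite tr_diag_mx.
have DnU : Dnew \in unitmx.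
  apply: diag_unit => i; rewrite mxE; case: splitP => i' _; first by apply: hd.
  by rewrite [i']ord1 mxE eqxx mulr1n.
have DnE : Dnew = block_mx D 0 0 e%:M.
  rewrite /Dnew diag_mx_row; congr block_mx.
  by apply/matrixP => a b; rewrite [a]ord1 [b]ord1 !mxE eqxx.
have WuT : Wu^T = block_mx W^T 0 0 se^-1%:M.
  by rewrite /Wu tr_block_mx !trmx0 tr_scalar_mx.
have WuD : Wu^T *m Dnew = block_mx (W^T *m D) 0 0 (se^-1 * e)%:M.
  by rewrite WuT DnE mulmx_block !mulmx0 !mul0mx !addr0 !add0r scalar_mxM.
have HWu : Wu^T *m Dnew *m Wu = 1%:M.
  rewrite WuD /Wu mulmx_block !mulmx0 !mul0mx !addr0 !add0r HW -scalar_mxM.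
  have -> : se^-1 * e * se^-1 = 1 by rewrite -se2; field.
  by rewrite -scalar_mx_block.
have Vj : V^T *m M *m j = 0.
  rewrite /j -scalemxAr /h mulmxBr !mulmxA HV mul1mx /Vc subrr scaler0 //.
have jV : j^T *m M *m V = 0.
  have -> : j^T *m M *m V = (V^T *m M *m j)^T by rewrite !trmx_mul trmxK MT mulmxA.
  by rewrite Vj trmx0.
have jj : j^T *m M *m j = 1%:M.
  set x := (h^T *m M *m h) 0 0.
  have x0 : 0 < x by rewrite -sqrtr_gt0.
  have px : p ^+ 2 = x by rewrite sqr_sqrtr // ltW.
  rewrite /j -scalemxAr linearZ /= -!scalemxAl [h^T *m M *m h]mx11_scalar -/x.
  rewrite scalerA scale_scalar_mx -px; congr (_%:M); field.
  by [].
have K : (row_mx V j)^T *m M *m row_mx V j = 1%:M.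
  by rewrite tr_row_mx mul_col_mx mul_col_row HV Vj jV jj -scalar_mx_block.
have HVnew : Vnew^T *m M *m Vnew = 1%:M.
  have -> : Vnew^T *m M *m Vnew = VQ^T *m ((row_mx V j)^T *m M *m row_mx V j) *m VQ.
    by rewrite /Vnew trmx_mul !mulmxA.
  by rewrite K mulmx1 -HVQ mulmx1.
have HWnew : Wnew^T *m Dnew *m Wnew = 1%:M.
  have -> : Wnew^T *m Dnew *m Wnew = WQ^T *m (Wu^T *m Dnew *m Wu) *m WQ.
    by rewrite /Wnew trmx_mul !mulmxA.
  by rewrite HWu mulmx1 -HWQ mulmx1.
have EAnew : row_mx U c *m Dnew = Vnew *m diag_mx sigQ *m (Wnew^T *m Dnew).
  have -> : Vnew *m diag_mx sigQ *m (Wnew^T *m Dnew) = row_mx V j *m Q *m (Wu^T *m Dnew).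
    by rewrite /Vnew /Wnew EQ mulmx1 trmx_mul !mulmxA.
  rewrite WuD /Q -mulmxA mulmx_block !mulmx0 !mul0mx !addr0 !add0r.
  rewrite mul_row_block !mulmx0 !addr0 DnE mul_row_block !mulmx0 !addr0 !add0r.
  congr row_mx; first by rewrite /D EA -mulmxA.
  rewrite -[in j *m _]scalar_mxM !mul_mx_scalar -!scalemxAr /j scalerA /h.
  have E1 : se^-1 * e * se = e by field.
  have E2 : se * p * (se^-1 * e) * p^-1 = e by field; rewrite pn sen.
  rewrite scalerA E2 -/se E1 -scalerDr addrC subrK //.
have [r5 r7 r8 r9 rHA] := @svd_rest _ _ _ _ _ _ _ _ _ _ DnT DnU EAnew HVnew HWnew.
have [_ _ _ _ qHA] := @svd_rest _ _ _ _ _ _ _ _ _ _ (trmx1 _ _) (unitmx1 _ _) EQ HVQ HWQ.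
have kqk : (kq <= k + 1)%N.
  have := mxrank1 R kq; rewrite -HVQ => <-.
  by apply: leq_trans (mxrankM_maxl _ _) _; apply: leq_trans (mxrankM_maxl _ _) (rank_leq_col _).
have kqs : (kq <= s + 1)%N.
  have := mxrank1 R kq; rewrite -HWnew => <-.
  by apply: leq_trans (mxrankM_maxl _ _) _; apply: leq_trans (mxrankM_maxl _ _) (rank_leq_col _).
have CP : char_poly (hadj M Dnew (row_mx U c *m Dnew) *m (row_mx U c *m Dnew)) =
    'X^(s + 1 - kq) * \prod_(i < kq) ('X - (sigQ 0 i ^+ 2)%:P).
  set Y := WQ *m diag_mx sigQ *m diag_mx sigQ *m (WQ^T *m 1%:M) *m (Wu^T *m Dnew).
  have XY : hadj M Dnew (row_mx U c *m Dnew) *m (row_mx U c *m Dnew) = Wu *m Y.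
    by rewrite rHA /Y /Wnew trmx_mul mulmx1 !mulmxA.
  have YX : Y *m Wu = hadj 1%:M 1%:M Q *m Q.
    by rewrite qHA /Y -mulmxA HWu mulmx1.
  have := @sylv _ _ _ Wu Y; rewrite -XY YX cpQ => E.
  apply: (mulfI (x := 'X^(k + 1))); first by rewrite expf_neq0 // polyX_eq0.
  rewrite E !mulrA -!exprD; congr (_ ^+ _ * _); lia.
by do !split.
Qed.
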